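(* For every positive integer $n$, as formal power series in $z$, \[ \frac{(-tzq;q)_{n}}{(zq;q)_{n}} = 1+ \sum_{k \geq 1} z^k q^k \left( \overline{{ n+k-1 \brack k}}_{q,t} + t\, \overline{ { n+k-2 \brack k-1}}_{q,t} \right). \]
   Context: An overpartition is a partition in which the last occurrence of each distinct part size may be overlined; its weight $|\lambda|$ is the sum of its parts. For integers $0\le b\le a$, $\overline{{a \brack b}}_{q,t}=\sum_{\lambda} t^{\#_o(\lambda)} q^{|\lambda|}$, the sum over all overpartitions $\lambda$ with largest part at most $a-b$ and at most $b$ parts, $\#_o(\lambda)$ being the number of overlined parts. $(x;q)_k=\prod_{j=1}^k(1-xq^{j-1})$. *)

(* Defs.v *)
From HB Require Import structures.
From mathcomp Require Import all_boot all_order all_algebra.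
From mathcomp Require Import mpoly.
Set Implicit Arguments. Unset Strict Implicit. Unset Printing Implicit Defensive.
Import GRing.Theory.
Local Open Scope ring_scope.

(* Coefficient ring: Z[q,t] with q = 'X_0 and t = 'X_1. *)
Definition K := {mpoly int[2]}.
Definition qv : K := 'X_(@Ordinal 2 0 isT).
Definition tv : K := 'X_(@Ordinal 2 1 isT).

(* An overpartition with largest part <= m and at most b parts is encoded by
   f : 'I_m -> 'I_(b.+1) * bool : (f i).1 = multiplicity of the part size i+1,
   (f i).2 = whether the last occurrence of part size i+1 is overlined
   (only allowed if that size occurs). *)
Definition ovp_valid (m b : nat) (f : {ffun 'I_m -> 'I_b.+1 * bool}) : bool :=
  [forall i, (f i).2 ==> (0 < (f i).1)%N] && (\sum_(i < m) (f i).1 <= b)%N.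

Definition ovp_weight (m b : nat) (f : {ffun 'I_m -> 'I_b.+1 * bool}) : nat :=
  \sum_(i < m) (i.+1 * (f i).1)%N.

Definition ovp_noverlined (m b : nat) (f : {ffun 'I_m -> 'I_b.+1 * bool}) : nat :=
  #|[set i | (f i).2]|.

(* overline [a brack b]_{q,t} : largest part <= a - b, at most b parts. *)
Definition obin (a b : nat) : K :=
  \sum_(f : {ffun 'I_(a - b) -> 'I_b.+1 * bool} | ovp_valid f)
     tv ^+ ovp_noverlined f * qv ^+ ovp_weight f.

(* Power series in z are represented via polynomials {poly K} in z = 'X. *)
(* (x;q)_n with x = c z :  prod_{j<n} (1 - c q^j z) *)
Definition qpoch_z (c : K) (n : nat) : {poly K} :=
  \prod_(j < n) (1 - (c * qv ^+ j) *: 'X).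

Definition rhs_trunc (n N : nat) : {poly K} :=
  1 + \sum_(1 <= k < N.+1)
        (qv ^+ k * (obin (n + k - 1) k + tv * obin (n + k - 2) (k - 1))) *: 'X^k.

(* Main.v *)
Require Import Defs.
From HB Require Import structures.
From mathcomp Require Import all_boot all_order all_algebra.
From mathcomp Require Import mpoly.
From mathcomp Require Import ring zify.
Import GRing.Theory.
Local Open Scope ring_scope.

Definition eqN (N : nat) (p r : {poly K}) := forall i, (i <= N)%N -> p`_i = r`_i.

Lemma eqN_refl N p : eqN N p p. Proof. by []. Qed.

Lemma eqN_mul N p p' r r' : eqN N p p' -> eqN N r r' -> eqN N (p * r) (p' * r').
Proof.
move=> hp hr i iN; rewrite !coefM; apply: eq_bigr => j _.
have jl := ltn_ord j.
rewrite hp ?hr //; lia.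
Qed.

Arguments eqN_mul {N p p' r r'}.

Lemma eqN_prod N m (F G : 'I_m -> {poly K}) :
  (forall i, eqN N (F i) (G i)) -> eqN N (\prod_i F i) (\prod_i G i).
Proof.
move=> h.
apply: (@big_ind2 _ _ (eqN N) 1 *%R 1 *%R).
- exact: eqN_refl.
- move=> x1 x2 y1 y2 h1 h2. exact (eqN_mul h1 h2).
- by move=> i _; apply: h.
Qed.

Definition geo (a : K) (M : nat) : {poly K} := \sum_(c < M) (a *: 'X) ^+ c.+1.

Lemma coef_geo a M j : (geo a M)`_j = if (0 < j <= M)%N then a ^+ j else 0.
Proof.
rewrite /geo coef_sum.
under eq_bigr => c _ do rewrite exprZn coefZ coefXn.
case: j => [|j].
  by rewrite /=; apply: big1 => c _; rewrite mulr0.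
case: (ltnP j M) => jM /=.
  rewrite (bigD1 (Ordinal jM)) //= eqxx mulr1 big1 ?addr0 // => c hc.
  have : (j.+1 == c.+1) = false.
    apply/negbTE; apply: contra hc => /eqP [] e; apply/eqP/val_inj => /=.
    by rewrite e.
  by move=> ->; rewrite mulr0.
apply: big1 => c _.
have : (j.+1 == c.+1) = false by have := ltn_ord c; lia.
by move=> ->; rewrite mulr0.
Qed.

Lemma geo_mul a M : (1 - a *: 'X) * geo a M = a *: 'X - (a *: 'X) ^+ M.+1.
Proof.
elim: M => [|M IH].
  by rewrite /geo big_ord0 mulr0 expr1 subrr.
rewrite /geo big_ord_recr /= mulrDr -/(geo a M) IH.
set y := a *: 'X.
rewrite !exprS; ring.
Qed.

Lemma high0 N a (r : {poly K}) j : (j <= N)%N -> ((a *: 'X) ^+ N.+1 * r)`_j = 0.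
Proof.
move=> jN; rewrite exprZn -scalerAl coefZ coefXnM.
have -> : (j < N.+1)%N by lia.
by rewrite mulr0.
Qed.

Definition Fb (b i : nat) : {poly K} := 1 + (1 + tv) *: geo (qv ^+ i.+2) b.
Definition Ub (M : nat) : {poly K} := 1 + geo qv M.

Lemma coef_Ub M j : (Ub M)`_j = if (j <= M)%N then qv ^+ j else 0.
Proof.
rewrite /Ub coefD coef1 coef_geo; case: j => [|j] /=.
  by rewrite addr0 expr0.
by rewrite add0r.
Qed.

Section Main.
Variables (m b : nat).
Notation T := ('I_b.+1 * bool)%type.

Definition w (i : 'I_m) (x : T) : {poly K} :=
  if x.2 ==> (0 < x.1)%N then
    (tv ^+ x.2 * qv ^+ (i.+1 * x.1)%N) *: (qv *: 'X) ^+ x.1 else 0.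

Lemma step1 (i : 'I_m) : Fb b i = \sum_(x : T) w i x.
Proof.
rewrite -(pair_bigA _ (fun c fl => w i (c, fl))) /=.
under eq_bigr => c _ do rewrite big_bool.
rewrite big_ord_recl /= /w /= add0r !expr0 muln0 expr0 mulr1 scale1r /Fb.
congr (_ + _).
rewrite /geo scaler_sumr; apply: eq_bigr => c _ /=.
rewrite /bump /= expr1 add1n scalerDl scale1r addrC; congr (_ + _).
  by rewrite mul1r !exprZn scalerA -exprM -exprD; congr (_ ^+ _ *: _); lia.
by rewrite !exprZn !scalerA -mulrA -exprM -exprD; congr (_ * _ ^+ _ *: _); lia.
Qed.

Lemma step3 (f : {ffun 'I_m -> T}) :
  \prod_i w i (f i) = if [forall i, (f i).2 ==> (0 < (f i).1)%N] then
     (tv ^+ ovp_noverlined f * qv ^+ ovp_weight f) *: (qv *: 'X) ^+ (\sum_i (f i).1)%N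
  else 0.
Proof.
case: (boolP [forall i, _]) => H.
  rewrite /w; under eq_bigr => i _ do rewrite (forallP H i).
  rewrite scaler_prod big_split /= !prodrXr.
  congr (tv ^+ _ * _ *: _).
  rewrite /ovp_noverlined -sum1dep_card [RHS]big_mkcond /=; apply: eq_bigr => i _.
  by case: (f i).2.
move/forallPn: H => [i Hi].
by rewrite (bigD1 i) //= /w (negbTE Hi) mul0r.
Qed.
End Main.

Lemma obin_main (a b : nat) : (qv ^+ b)%R * obin a b = ((\prod_(i < (a - b)%N) Fb b i) * Ub b)`_b.
Proof.
rewrite /obin; move: (a - b)%N => m.
have -> : \prod_(i < m) Fb b i =
    \sum_(f : {ffun 'I_m -> 'I_b.+1 * bool}) \prod_i @w m b i (f i).
  rewrite -bigA_distr_bigA; apply: eq_bigr => i _; exact: step1.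
rewrite mulr_suml coef_sum big_mkcond mulr_sumr /=; apply: eq_bigr => f _.
rewrite step3 /ovp_valid.
case: (boolP [forall i, _]) => H /=; last by rewrite mulr0 mul0r coef0.
rewrite exprZn -!scalerAl !coefZ coefXnM.
case: ltnP => h.
  by rewrite !mulr0.
by rewrite coef_Ub leq_subr -exprD subnKC // mulrC.
Qed.

Lemma Fb_eqN k N i : (k <= N)%N -> eqN k (Fb N i) (Fb k i).
Proof.
move=> kN j jk; rewrite /Fb !coefD !coefZ !coef_geo jk.
by have -> : (j <= N)%N by lia.
Qed.

Lemma Ub_eqN k N : (k <= N)%N -> eqN k (Ub N) (Ub k).
Proof.
move=> kN j jk; rewrite !coef_Ub jk.
by have -> : (j <= N)%N by lia.
Qed.

Lemma Wcoef m N k : (k <= N)%N ->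
  ((\prod_(i < m) Fb N i) * Ub N)`_k = qv ^+ k * obin (m.+1 + k - 1) k.
Proof.
move=> kN; rewrite obin_main.
have -> : (m.+1 + k - 1 - k = m)%N by lia.
have hp : eqN k (\prod_(i < m) Fb N i) (\prod_(i < m) Fb k i).
  by apply: eqN_prod => i; apply: (@Fb_eqN k N i kN).
exact: (eqN_mul hp (@Ub_eqN k N kN) k (leqnn k)).
Qed.

Lemma P0 m N : (\prod_(i < m) Fb N i)`_0 = 1.
Proof.
have h : eqN 0 (\prod_(i < m) Fb N i) (\prod_(i < m) 1).
  apply: eqN_prod => i j; rewrite leqn0 => /eqP ->.
  by rewrite /Fb coefD coefZ coef_geo /= mulr0 addr0.
by rewrite h // big1 // coef1.
Qed.

Lemma sum_pick (F : nat -> K) N j :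
  \sum_(1 <= k < N.+1) F k * (j == k)%:R = if (0 < j <= N)%N then F j else 0.
Proof.
case: (boolP (0 < j <= N)%N) => h.
  have /andP [h1 h2] := h.
  rewrite (bigD1_seq j) /= ?mem_index_iota ?iota_uniq //.
  rewrite eqxx mulr1 big1 ?addr0 // => k hk.
  by rewrite eq_sym (negbTE hk) mulr0.
rewrite big_nat_cond big1 // => k /andP [/andP [h1 h2] _].
have -> : (j == k) = false.
  apply/negbTE; apply: contra h => /eqP ->; apply/andP; split; lia.
by rewrite mulr0.
Qed.

Lemma hR m N : eqN N (rhs_trunc m.+1 N)
  ((1 + (tv * qv) *: 'X) * ((\prod_(i < m) Fb N i) * Ub N)).
Proof.
move=> j jN; rewrite mulrDl mul1r -scalerAl [RHS]coefD coefZ coefXM.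
rewrite /rhs_trunc coefD coef1 coef_sum.
under eq_bigr => k _ do rewrite coefZ coefXn.
rewrite sum_pick.
case: j jN => [|j] jN /=.
  by rewrite coef0M P0 coef_Ub /= expr0 !mulr1 addr0 mulr0 addr0.
rewrite jN add0r !Wcoef //; last by lia.
have -> : (m.+1 + j.+1 - 2 = m.+1 + j - 1)%N by lia.
have -> : (j.+1 - 1 = j)%N by lia.
rewrite exprS; ring.
Qed.

Lemma AU N : eqN N ((1 - qv *: 'X) * Ub N) 1.
Proof.
move=> j jN; rewrite /Ub mulrDr mulr1 geo_mul.
have -> : 1 - qv *: 'X + (qv *: 'X - (qv *: 'X) ^+ N.+1) =
          1 - (qv *: 'X) ^+ N.+1 * 1 by rewrite mulr1; ring.
by rewrite coefB high0 // subr0.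
Qed.

Lemma AF N (i : nat) : eqN N ((1 - (qv * qv ^+ i.+1) *: 'X) * Fb N i)
                              (1 - (- (tv * qv) * qv ^+ i.+1) *: 'X).
Proof.
move=> j jN.
rewrite -exprS /Fb mulrDr mulr1 -scalerAr geo_mul.
set y := qv ^+ i.+2 *: 'X.
have e : (- (tv * qv) * qv ^+ i.+1) *: 'X = - (tv%:P * y).
  by rewrite /y mul_polyC scalerA mulNr -mulrA -exprS scaleNr.
rewrite e.
have -> : 1 - y + (1 + tv) *: (y - y ^+ N.+1) =
   (1 - - (tv%:P * y)) - ((1 + tv) *: (y ^+ N.+1 * 1)).
  rewrite -!mul_polyC polyCD polyC1 mulr1; ring.
by rewrite coefB coefZ /y high0 // mulr0 subr0.
Qed.

Theorem theorem3p2 (n : nat) : (0 < n)%N ->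
  forall N i : nat, (i <= N)%N ->
    (qpoch_z qv n * rhs_trunc n N)`_i = (qpoch_z (- (tv * qv)) n)`_i.
Proof.
case: n => // m _ N i iN.
rewrite (eqN_mul (eqN_refl N (qpoch_z qv m.+1)) (@hR m N) i iN).
have E : qpoch_z qv m.+1 * ((1 + (tv * qv) *: 'X) * ((\prod_(i < m) Fb N i) * Ub N))
   = ((1 - qv *: 'X) * Ub N) *
     ((1 + (tv * qv) *: 'X) * \prod_(i < m) ((1 - (qv * qv ^+ i.+1) *: 'X) * Fb N i)).
  rewrite /qpoch_z big_ord_recl big_split /= expr0 mulr1.
  set P1 := \prod_(i < m) _.
  set P2 := \prod_(i < m) Fb N i.
  ring.
rewrite E.
have -> : qpoch_z (- (tv * qv)) m.+1 =
    1 * ((1 + (tv * qv) *: 'X) * \prod_(i < m) (1 - (- (tv * qv) * qv ^+ i.+1) *: 'X)).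
  rewrite /qpoch_z big_ord_recl /= expr0 mulr1 scaleNr opprK mul1r.
  by congr (_ * _); apply: eq_bigr.
apply: (eqN_mul (AU N)) => //.
apply: eqN_mul => //.
apply: eqN_prod => k; exact: AF.
Qed.
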